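(* Let $x,y \in \mathbb{N}$, let $S$ be a finite set of functions $f_i(z) = a_i z + b_i$ ($1 \le i \le N$) with $a_i, b_i \in \mathbb{Z}$ and $a_i > 0$, let $k > 0$ be an integer and $g(z) = z - k$, and put $F = S \cup \{g\}$. Then $x \xrightarrow{F}_+ y$ if and only if there exists $z \in \mathbb{Z}$ with $z \ge y$, $z \equiv y \pmod k$, and $x \xrightarrow{S}_+ z$.
   Context: $\mathbb{N} = \{0,1,2,\dots\}$. For a set $S$ of affine functions $\mathbb{Z}\to\mathbb{Z}$, an $S$-composition is a finite tuple $(s_1,\dots,s_K)$ with $K \ge 0$ and each $s_i \in S$, identified with the function $s_K \circ \dots \circ s_1$. Its orbit at $x$ is $\{x, s_1(x), (s_2\circ s_1)(x), \dots, (s_K\circ\dots\circ s_1)(x)\}$. The composition is valid with respect to $x$ if every element of its orbit at $x$ is nonnegative. We write $x \xrightarrow{S}_+ y$ if there is an $S$-composition $G$ valid with respect to $x$ with $G(x) = y$. *)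

(* Defs.v *)
From Stdlib Require Import ZArith List.
Open Scope Z_scope.

Definition aff : Type := (Z * Z)%type.
Definition app_aff (f : aff) (z : Z) : Z := fst f * z + snd f.

(* An S-composition (s_1, ..., s_K), as a list [s_1; ...; s_K] applied left to
   right: comp_apply [s_1;...;s_K] x = (s_K o ... o s_1)(x). *)
Fixpoint comp_apply (l : list aff) (x : Z) : Z :=
  match l with
  | nil => x
  | f :: l' => comp_apply l' (app_aff f x)
  end.

Fixpoint valid_from (l : list aff) (x : Z) : Prop :=
  match l with
  | nil => 0 <= x
  | f :: l' => 0 <= x /\ valid_from l' (app_aff f x)
  end.

Definition reach_pos (S : aff -> Prop) (x y : Z) : Prop :=
  exists l : list aff, Forall S l /\ valid_from l x /\ comp_apply l x = y.

(* Main.v *)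
Require Import Defs.
From Stdlib Require Import ZArith List Lia.
Open Scope Z_scope.

Lemma fwd (S : list aff) (k : Z) :
  (forall f, In f S -> 0 < fst f) -> 0 < k ->
  forall l x m, Forall (fun f => In f S \/ f = (1, - k)) l -> valid_from l x -> 0 <= m ->
  exists l' m', Forall (fun f => In f S) l' /\ valid_from l' (x + m*k) /\
    comp_apply l' (x + m*k) = comp_apply l x + m'*k /\ 0 <= m'.
Proof.
  intros HS Hk l. induction l as [|f l IH]; intros x m HF Hv Hm.
  - exists nil, m. simpl in *. repeat split; [constructor|nia..].
  - inversion HF as [|? ? Hf HF']; subst. simpl in Hv. destruct Hv as [Hx Hv].
    destruct Hf as [Hf|Hf].
    + destruct f as [a b]. pose proof (HS _ Hf) as Ha. simpl in Ha.
      destruct (IH (app_aff (a,b) x) (a*m) HF' Hv ltac:(nia)) as [l' [m' [H1 [H2 [H3 H4]]]]].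
      assert (E : app_aff (a,b) (x + m*k) = app_aff (a,b) x + a*m*k)
        by (unfold app_aff; cbn [fst snd]; ring).
      exists ((a,b)::l'), m'. simpl. rewrite E. repeat split; auto; nia.
    + subst f.
      destruct (IH (app_aff (1,-k) x) (m+1) HF' Hv ltac:(lia)) as [l' [m' [H1 [H2 [H3 H4]]]]].
      assert (E : app_aff (1,-k) x + (m+1)*k = x + m*k) by (unfold app_aff; cbn [fst snd]; ring).
      rewrite E in H2, H3. exists l', m'. simpl. repeat split; auto.
Qed.

Lemma app_valid l1 l2 x : valid_from l1 x -> valid_from l2 (comp_apply l1 x) ->
  valid_from (l1 ++ l2) x.
Proof.
  revert x; induction l1; simpl; intros x H1 H2; [exact H2|].
  destruct H1; split; auto.
Qed.

Lemma app_comp l1 l2 x : comp_apply (l1 ++ l2) x = comp_apply l2 (comp_apply l1 x).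
Proof. revert x; induction l1; simpl; auto. Qed.

Lemma rep (k : Z) : 0 < k -> forall n z, 0 <= z - Z.of_nat n * k ->
  valid_from (repeat (1, -k) n) z /\ comp_apply (repeat (1,-k) n) z = z - Z.of_nat n * k.
Proof.
  intros Hk n; induction n as [|n IH]; intros z Hz; cbn [repeat comp_apply valid_from].
  - split; lia.
  - rewrite Nat2Z.inj_succ in *. destruct (IH (app_aff (1,-k) z)) as [A B]; unfold app_aff in *; cbn [fst snd] in *.
    + nia.
    + split; [split; [nia|exact A]|]. rewrite B. lia.
Qed.

Theorem mainTheorem11 (x y : Z) (S : list aff) (k : Z) :
  0 <= x -> 0 <= y ->
  (forall f, In f S -> 0 < fst f) ->
  0 < k ->
  reach_pos (fun f => In f S \/ f = (1, - k)) x y <->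
  exists z : Z, y <= z /\ (k | z - y) /\ reach_pos (fun f => In f S) x z.
Proof.
  intros Hx Hy HS Hk. split.
  - intros [l [HF [Hv Hc]]].
    destruct (fwd S k HS Hk l x 0 HF Hv ltac:(lia)) as [l' [m' [H1 [H2 [H3 H4]]]]].
    exists (y + m'*k). repeat split.
    + nia.
    + exists m'. ring.
    + exists l'. rewrite Z.mul_0_l, Z.add_0_r in *. repeat split; auto. rewrite H3, Hc; auto.
  - intros [z [Hz [[q Hq] [l [HF [Hv Hc]]]]]].
    assert (Hq0 : 0 <= q) by nia.
    destruct (rep k Hk (Z.to_nat q) z) as [A B]. { rewrite Z2Nat.id; lia. }
    exists (l ++ repeat (1,-k) (Z.to_nat q)). repeat split.
    + apply Forall_app; split.
      * eapply Forall_impl; [|exact HF]; auto.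
      * apply Forall_forall; intros f Hf; apply repeat_spec in Hf; auto.
    + apply app_valid; auto. rewrite Hc; auto.
    + rewrite app_comp, Hc, B, Z2Nat.id; lia.
Qed.
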